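(* Let $\mathbf{R}^{\mathrm{o}}$ be a finite set of obligations and $\mathbf{R}=(\emptyset,\mathbf{R}^{\mathrm{o}})$. Let $a,x$ be Boolean formulas, let the overriding relation $\triangleright$ be computed relative to $\Gamma=\{\Diamond a\}$, and let entailment range over replete $\mathbf{R}$-ordered models. If $x\in\bigcap\mathit{outf}(\mathbf{R}^{\mathrm{o}}_{\triangleright},a,\{a\})$ (with underlying I/O operation $out_4^{+}$), then $(\{\Diamond a\},\mathbf{R})\mid\sim\bigcirc(x/a)$.
   Context: Boolean formulas are built from propositional letters with the classical connectives; $\models_{\mathrm{PL}}$ is classical propositional entailment, $\models_{\mathrm{S5}}$ entailment in S5; $\Diamond A$ abbreviates $\neg\Box\neg A$, and $w\models\Box A$ iff $A$ holds at every world of the model. An obligation is $\bigcirc(B/A)$ with $A,B$ Boolean; body $b(\bigcirc(B/A))=A$, head $h(\bigcirc(B/A))=B$. Overriding relative to $\Gamma$: $r_j\triangleright r_i$ iff (i) $\{h(r_i),h(r_j)\}\cup\Gamma\models_{\mathrm{S5}}\bot$; (ii) $b(r_j)\models_{\mathrm{PL}}b(r_i)$ and $b(r_i)\not\models_{\mathrm{PL}}b(r_j)$; (iii) $\{h(r_i),b(r_j)\}\not\models_{\mathrm{PL}}\bot$. An $\mathbf{R}$-ordered model (no normality conditionals) is $M=(W,\succeq_N,\succeq_I,v)$, $W\neq\emptyset$, $v$ a valuation, $\succeq_N=W\times W$, and $w_1\succeq_I w_2$ iff $V(w_1)\subseteq V(w_2)$, where $V(w)=\{r_i\in\mathbf{R}^{\mathrm{o}}: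 w\models b(r_i)\wedge\neg h(r_i)$ and $w\not\models b(r_j)$ for all $r_j\in\mathbf{R}^{\mathrm{o}}$ with $r_j\triangleright r_i\}$. $\max_{\succeq}(X)=\{w\in X:\forall u\in X(u\succeq w\Rightarrow w\succeq u)\}$; $\Vert A\Vert$ = set of worlds where $A$ holds. For $U,U'\subseteq W$, $U\succeq_I^{s}U'$ iff for every $u'\in U'$ there is $u\in U$ with $u\succeq_I u'$. Truth of obligations: $w\models\bigcirc(B/A)$ iff $\max_{\succeq_N}(\Vert A\wedge\neg B\Vert)\not\succeq_I^{s}\max_{\succeq_N}(\Vert A\wedge B\Vert)$. $M$ is replete if every PL-consistent Boolean formula holds at some world. $(\Gamma,\mathbf{R})\mid\sim\varphi$ iff in every (replete) $\mathbf{R}$-ordered model, every world satisfying all of $\Gamma$ satisfies $\varphi$. I/O logic: for a set $H$ of pairs of Boolean formulas, $\mathrm{m}(H)=\{a\rightarrow x:(a,x)\in H\}$, $out_4^{+}(H,a)=\{x:\{a\}\cup\mathrm{m}(H)\models_{\mathrm{PL}}x\}$; $\mathit{maxf}(N,a,C)$ is the set of $\subseteq$-maximal $H\subseteq N$ with $out_4^{+}(H,a)\cup C$ PL-consistent; $\mathit{outf}(N,a,C)=\{out_4^{+}(H,a):H\in\mathit{maxf}(N,a,C)\}$. Translation: for $r_i=\bigcirc(x/a)$, $D(r_i)=\{r_j\in\mathbf{R}^{\mathrm{o}}:r_j\triangleright r_i\}$, $r_i^{\triangleright}=(a\wedge\bigwedge_{r_j\in D(r_i)}\neg b(r_j),x)$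 if $D(r_i)\neq\emptyset$ and $(a,x)$ otherwise; $\mathbf{R}^{\mathrm{o}}_{\triangleright}=\{r^{\triangleright}:r\in\mathbf{R}^{\mathrm{o}}\}$. *)

(* Defs.v *)
From Stdlib Require Import List Bool ClassicalEpsilon.
Import ListNotations.

Inductive form : Type :=
| Var : nat -> form
| Bot : form
| Neg : form -> form
| And : form -> form -> form
| Or  : form -> form -> form
| Imp : form -> form -> form.

Fixpoint eval (v : nat -> bool) (f : form) : bool :=
  match f with
  | Var n => v n
  | Bot => false
  | Neg g => negb (eval v g)
  | And g h => eval v g && eval v h
  | Or g h => eval v g || eval v h
  | Imp g h => implb (eval v g) (eval v h)
  end.

Definition pl_ent (G : form -> Prop) (x : form) : Prop :=
  forall v : nat -> bool, (forall g, G g -> eval v g = true) -> eval v x = true.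

Definition pl_ent1 (A B : form) : Prop := pl_ent (fun g => g = A) B.

Definition pl_consistent (A : form) : Prop := ~ pl_ent1 A Bot.

Inductive mform : Type :=
| MVar : nat -> mform
| MBot : mform
| MNeg : mform -> mform
| MAnd : mform -> mform -> mform
| MOr  : mform -> mform -> mform
| MImp : mform -> mform -> mform
| MBox : mform -> mform.

Fixpoint emb (f : form) : mform :=
  match f with
  | Var n => MVar n
  | Bot => MBot
  | Neg g => MNeg (emb g)
  | And g h => MAnd (emb g) (emb h)
  | Or g h => MOr (emb g) (emb h)
  | Imp g h => MImp (emb g) (emb h)
  end.

Definition MDia (A : mform) : mform := MNeg (MBox (MNeg A)).

(** Truth at a world of a model with universal accessibility (S5):
    w |= Box A iff A holds at every world of the model. *)
Fixpoint msat {W : Type} (val : W -> nat -> bool) (w : W) (f : mform) : Prop :=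
  match f with
  | MVar n => val w n = true
  | MBot => False
  | MNeg g => ~ msat val w g
  | MAnd g h => msat val w g /\ msat val w h
  | MOr g h => msat val w g \/ msat val w h
  | MImp g h => msat val w g -> msat val w h
  | MBox g => forall u : W, msat val u g
  end.

Definition s5_ent (G : mform -> Prop) (phi : mform) : Prop :=
  forall (W : Type) (val : W -> nat -> bool) (w : W),
    (forall g, G g -> msat val w g) -> msat val w phi.

(** * Obligations O(B/A) represented as pairs (A, B) = (body, head) *)
Definition obl : Type := (form * form)%type.
Definition body (r : obl) : form := fst r.
Definition head (r : obl) : form := snd r.

(** Overriding relative to Gamma: [overrides G rj ri] means rj |> ri. *)
Definition overrides (G : mform -> Prop) (rj ri : obl) : Prop :=
  s5_ent (fun m => m = emb (head ri) \/ m = emb (head rj) \/ G m) MBot /\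
  (pl_ent1 (body rj) (body ri) /\ ~ pl_ent1 (body ri) (body rj)) /\
  ~ pl_ent (fun g => g = head ri \/ g = body rj) Bot.

(** * R-ordered models (R = (empty, Ro): no normality conditionals) *)
Section OrderedModel.
Variables (Ro : list obl) (G : mform -> Prop) (W : Type) (val : W -> nat -> bool).

Definition holds (w : W) (A : form) : Prop := eval (val w) A = true.

Definition extent (A : form) : W -> Prop := fun w => holds w A.

Definition Vset (w : W) : obl -> Prop := fun ri =>
  In ri Ro /\ holds w (And (body ri) (Neg (head ri))) /\
  (forall rj, In rj Ro -> overrides G rj ri -> ~ holds w (body rj)).

Definition geN (w1 w2 : W) : Prop := True.

Definition geI (w1 w2 : W) : Prop := forall r, Vset w1 r -> Vset w2 r.

Definition maxrel (ge : W -> W -> Prop) (X : W -> Prop) : W -> Prop :=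
  fun w => X w /\ (forall u, X u -> ge u w -> ge w u).

Definition geI_s (U U' : W -> Prop) : Prop :=
  forall u', U' u' -> exists u, U u /\ geI u u'.

Definition obl_sat (w : W) (r : obl) : Prop :=
  ~ geI_s (maxrel geN (extent (And (body r) (Neg (head r)))))
          (maxrel geN (extent (And (body r) (head r)))).

Definition replete : Prop :=
  forall A : form, pl_consistent A -> exists w, holds w A.

End OrderedModel.

Definition nm_entails (Ro : list obl) (Gov : mform -> Prop)
    (Gamma : mform -> Prop) (r : obl) : Prop :=
  forall (W : Type) (val : W -> nat -> bool),
    replete W val ->
    forall w : W, (forall g, Gamma g -> msat val w g) -> obl_sat Ro Gov W val w r.

Definition mset (H : obl -> Prop) : form -> Prop :=
  fun f => exists p, H p /\ f = Imp (fst p) (snd p).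

Definition out4p (H : obl -> Prop) (a : form) : form -> Prop :=
  fun x => pl_ent (fun g => g = a \/ mset H g) x.

Definition pconsistent (S : form -> Prop) : Prop := ~ pl_ent S Bot.

Definition subset_obl (H H' : obl -> Prop) : Prop := forall p, H p -> H' p.

Definition io_cons (H : obl -> Prop) (a : form) (C : form -> Prop) : Prop :=
  pconsistent (fun f => out4p H a f \/ C f).

Definition maxf (N : obl -> Prop) (a : form) (C : form -> Prop) (H : obl -> Prop) : Prop :=
  subset_obl H N /\ io_cons H a C /\
  (forall H', subset_obl H H' -> subset_obl H' N -> io_cons H' a C -> subset_obl H' H).

Definition in_cap_outf (N : obl -> Prop) (a : form) (C : form -> Prop) (x : form) : Prop :=
  forall H, maxf N a C H -> out4p H a x.

Definition dec (P : Prop) : bool :=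
  if excluded_middle_informative P then true else false.

(** conjunction of a nonempty list (Top for the empty list, unused) *)
Fixpoint bigconj (l : list form) : form :=
  match l with
  | [] => Neg Bot
  | [f] => f
  | f :: l' => And f (bigconj l')
  end.

Definition Dlist (Ro : list obl) (G : mform -> Prop) (ri : obl) : list obl :=
  filter (fun rj => dec (overrides G rj ri)) Ro.

Definition transl (Ro : list obl) (G : mform -> Prop) (ri : obl) : obl :=
  match Dlist Ro G ri with
  | [] => ri
  | D => (And (body ri) (bigconj (map (fun rj => Neg (body rj)) D)), head ri)
  end.

Definition transl_set (Ro : list obl) (G : mform -> Prop) : obl -> Prop :=
  fun p => exists r, In r Ro /\ p = transl Ro G r.

(* Main.v *)
Require Import Defs.
From Stdlib Require Import List Bool Classical ClassicalEpsilon Arith Lia.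
Import ListNotations.

Lemma dec_iff (P : Prop) : dec P = true <-> P.
Proof. unfold dec; destruct excluded_middle_informative; split; intuition congruence. Qed.

Lemma msat_emb {W : Type} (val : W -> nat -> bool) (w : W) (f : form) :
  msat val w (emb f) <-> eval (val w) f = true.
Proof.
  induction f; simpl; try tauto.
  - split; [tauto|discriminate].
  - rewrite IHf; destruct (eval (val w) f); simpl; intuition congruence.
  - rewrite IHf1, IHf2, andb_true_iff; tauto.
  - rewrite IHf1, IHf2, orb_true_iff; tauto.
  - rewrite IHf1, IHf2; destruct (eval (val w) f1), (eval (val w) f2); simpl; intuition congruence.
Qed.

Lemma eval_bigconj v l : eval v (bigconj l) = forallb (eval v) l.
Proof.
  induction l as [|f l IH]; [reflexivity|].
  destruct l as [|g l]; simpl in *.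
  - rewrite andb_true_r; reflexivity.
  - rewrite IH; reflexivity.
Qed.

Fixpoint conjl (l : list form) : form :=
  match l with [] => Neg Bot | f :: l => And f (conjl l) end.

Lemma eval_conjl v l : eval v (conjl l) = true <-> forall f, In f l -> eval v f = true.
Proof.
  induction l as [|f l IH]; simpl.
  - split; [tauto|reflexivity].
  - rewrite andb_true_iff, IH; split.
    + intros [H1 H2] g [<-|Hg]; auto.
    + intros H; split; auto.
Qed.

Lemma transl_eval Ro G v r :
  eval v (Imp (fst (transl Ro G r)) (snd (transl Ro G r))) =
  implb (eval v (body r) && forallb (fun rj => negb (eval v (body rj))) (Dlist Ro G r))
        (eval v (Defs.head r)).
Proof.
  unfold transl. destruct (Dlist Ro G r) as [|d D] eqn:E.
  - simpl. rewrite andb_true_r. reflexivity.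
  - simpl fst; simpl snd. change (implb (eval v (body r) && eval v (bigconj (map (fun rj => Neg (body rj)) (d :: D)))) (eval v (Defs.head r)) = implb (eval v (body r) && forallb (fun rj => negb (eval v (body rj))) (d :: D)) (eval v (Defs.head r))). rewrite eval_bigconj. f_equal. f_equal. clear E. induction (d :: D) as [|y l IH]; simpl; [reflexivity|rewrite IH; reflexivity].
Qed.

Lemma key Ro G W val (u : W) r : In r Ro ->
  (eval (val u) (Imp (fst (transl Ro G r)) (snd (transl Ro G r))) = true <->
   ~ Vset Ro G W val u r).
Proof.
  intros Hr. rewrite transl_eval. unfold Vset, holds. cbn [eval].
  assert (HB : forallb (fun rj => negb (eval (val u) (body rj))) (Dlist Ro G r) = true <->
     (forall rj, In rj Ro -> overrides G rj r -> eval (val u) (body rj) <> true)).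
  { rewrite forallb_forall. split.
    - intros H rj Hj Ho. assert (Hin : In rj (Dlist Ro G r))
        by (apply filter_In; split; [exact Hj|apply dec_iff; exact Ho]).
      specialize (H rj Hin). apply negb_true_iff in H. congruence.
    - intros H rj Hj. unfold Dlist in Hj. apply filter_In in Hj as [Hj Ho].
      apply (proj1 (dec_iff _)) in Ho. apply negb_true_iff, not_true_iff_false. exact (H rj Hj Ho). }
  revert HB.
  destruct (forallb (fun rj => negb (eval (val u) (body rj))) (Dlist Ro G r)) eqn:EB;
  destruct (eval (val u) (body r)) eqn:Eb, (eval (val u) (Defs.head r)) eqn:Eh; simpl;
  intros HB; split; intros H; try reflexivity; try discriminate; try tauto.
  all: first [ intros [_ [Hf _]]; discriminate | intros [_ [_ Hall]]; apply HB in Hall; discriminate | exfalso; apply H; split; [exact Hr|split; [reflexivity|]]; apply HB; reflexivity ].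
Qed.

Lemma decT (P : Prop) : dec P = true -> P. Proof. apply dec_iff. Qed.
Lemma Tdec (P : Prop) : P -> dec P = true. Proof. apply dec_iff. Qed.

Definition cnt (P : obl -> Prop) (l : list obl) : nat :=
  length (filter (fun r => dec (P r)) l).

Lemma cnt_le (P Q : obl -> Prop) l :
  (forall r, In r l -> P r -> Q r) -> cnt P l <= cnt Q l.
Proof.
  unfold cnt; induction l as [|y l IH]; intros H; simpl; [lia|].
  assert (IH' := IH (fun r Hr => H r (or_intror Hr))).
  destruct (dec (P y)) eqn:EP, (dec (Q y)) eqn:EQ; simpl; try lia.
  apply decT in EP. apply H in EP; [|left; reflexivity].
  apply Tdec in EP. congruence.
Qed.

Lemma cnt_eq (P Q : obl -> Prop) l :
  (forall r, In r l -> P r -> Q r) -> cnt Q l <= cnt P l ->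
  forall r, In r l -> Q r -> P r.
Proof.
  induction l as [|y l IH]; intros H Hc r Hr HQ; [destruct Hr|].
  assert (H' : forall r, In r l -> P r -> Q r) by (intros; apply H; simpl; auto).
  assert (Hle := cnt_le P Q l H').
  unfold cnt in *. simpl in Hc.
  destruct (dec (P y)) eqn:EP, (dec (Q y)) eqn:EQ; simpl in Hc.
  - destruct Hr as [<-|Hr]; [apply decT; exact EP|]. apply (IH H'); auto; lia.
  - apply decT in EP. apply H in EP; [|left; reflexivity].
    apply Tdec in EP. congruence.
  - unfold cnt in Hle. lia.
  - destruct Hr as [<-|Hr].
    + apply Tdec in HQ. congruence.
    + apply (IH H'); auto.
Qed.

Lemma min_ex {W : Type} (A : W -> Prop) (f : W -> nat) :
  (exists u, A u) -> exists u, A u /\ forall u2, A u2 -> f u <= f u2.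
Proof.
  intros [u Hu]. remember (f u) as n eqn:En. revert u Hu En.
  induction n as [n IH] using lt_wf_ind. intros u Hu En.
  destruct (classic (forall u2, A u2 -> f u <= f u2)) as [Hm|Hm]; [eauto|].
  apply not_all_ex_not in Hm as [u2 Hu2].
  apply imply_to_and in Hu2 as [HA Hlt].
  apply (IH (f u2)) with u2; auto. lia.
Qed.

Theorem theorem4 (Ro : list obl) (a x : form) :
  in_cap_outf (transl_set Ro (fun m => m = MDia (emb a))) a (fun f => f = a) x ->
  nm_entails Ro (fun m => m = MDia (emb a)) (fun m => m = MDia (emb a)) (a, x).
Proof.
  set (G0 := fun m => m = MDia (emb a)).
  intros Hx W val Hrep w Hw.
  specialize (Hw _ eq_refl). simpl in Hw.
  assert (Hex : exists u, holds W val u a).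
  { apply NNPP. intros Hn. apply Hw. intros u Hu. apply Hn. exists u.
    apply msat_emb in Hu. exact Hu. }
  set (V := fun u r => Vset Ro G0 W val u r).
  destruct (min_ex (fun u => holds W val u a) (fun u => cnt (V u) Ro) Hex)
    as [u' [Ha' Hmin]].
  assert (Heq : forall u, holds W val u a -> (forall r, V u r -> V u' r) ->
                forall r, In r Ro -> V u' r -> V u r).
  { intros u Hu Hs. apply cnt_eq; auto. }
  set (H0 := fun p => transl_set Ro G0 p /\ eval (val u') (Imp (fst p) (snd p)) = true).
  assert (sat0 : forall g, g = a \/ mset H0 g -> eval (val u') g = true).
  { intros g [->|[p [[_ Hp] ->]]]; [exact Ha'|exact Hp]. }
  assert (Hmax : maxf (transl_set Ro G0) a (fun f => f = a) H0).
  { split; [intros p Hp; exact (proj1 Hp)|split].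
    - intros Hent. specialize (Hent (val u')). simpl in Hent. discriminate Hent.
      intros g [Hg| ->]; [apply Hg; exact sat0|exact Ha'].
    - intros H' Hsub HN Hcons p Hp.
      unfold io_cons, pconsistent, pl_ent in Hcons.
      apply not_all_ex_not in Hcons as [v Hv].
      apply imply_to_and in Hv as [Hv _].
      set (L := filter (fun r => dec (H' (transl Ro G0 r))) Ro).
      set (Phi := And a (conjl (map (fun r => Imp (fst (transl Ro G0 r)) (snd (transl Ro G0 r))) L))).
      assert (HPhi : pl_consistent Phi).
      { intros Hc. specialize (Hc v). simpl in Hc. discriminate Hc.
        intros g ->. unfold Phi. cbn [eval]. apply andb_true_iff. split.
        - apply Hv. right. reflexivity.
        - apply eval_conjl. intros f Hf. apply in_map_iff in Hf as [r [<- Hr]].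
          apply filter_In in Hr as [_ Hr]. apply decT in Hr.
          apply Hv. left. intros v' Hv'. apply Hv'. right. eexists; split; [exact Hr|reflexivity]. }
      destruct (Hrep Phi HPhi) as [u Hu]. unfold holds, Phi in Hu. cbn [eval] in Hu.
      apply andb_true_iff in Hu as [Hua Hum].
      assert (Hm : forall r, In r Ro -> H' (transl Ro G0 r) ->
                     eval (val u) (Imp (fst (transl Ro G0 r)) (snd (transl Ro G0 r))) = true).
      { intros r Hr HH. apply (proj1 (eval_conjl _ _) Hum). apply in_map_iff.
        exists r; split; [reflexivity|]. apply filter_In; split; [exact Hr|apply Tdec; exact HH]. }
      assert (Hs : forall r, V u r -> V u' r).
      { intros r Hr. assert (HRo : In r Ro) by exact (proj1 Hr).
        apply NNPP. intros Hn. apply (proj2 (key Ro G0 W val u' r HRo)) in Hn.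
        assert (H0r : H0 (transl Ro G0 r)) by (split; [exists r; auto|exact Hn]).
        apply Hsub in H0r. apply (proj1 (key Ro G0 W val u r HRo) (Hm r HRo H0r)). exact Hr. }
      destruct (HN p Hp) as [r [HRo ->]].
      split; [exists r; auto|].
      apply (proj2 (key Ro G0 W val u' r HRo)). intros Hv'.
      apply (Heq u Hua Hs r HRo) in Hv'.
      apply (proj1 (key Ro G0 W val u r HRo) (Hm r HRo Hp)). exact Hv'. }
  assert (Hxo := Hx H0 Hmax).
  assert (Hxu' : eval (val u') x = true) by (apply Hxo; exact sat0).
  unfold obl_sat. intros Hs. unfold geI_s in Hs.
  destruct (Hs u') as [u [[Hu _] Hge]].
  { split; [|intros; exact I]. unfold extent, holds. simpl. rewrite Ha', Hxu'. reflexivity. }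
  unfold extent, holds in Hu. simpl in Hu. apply andb_true_iff in Hu as [Hua Hux].
  assert (Hxu : eval (val u) x = true).
  { apply Hxo. intros g [->|[p [[[r [HRo ->]] Hp] ->]]]; [exact Hua|].
    apply (proj2 (key Ro G0 W val u r HRo)). intros Hv.
    apply Hge in Hv. exact (proj1 (key Ro G0 W val u' r HRo) Hp Hv). }
  rewrite Hxu in Hux. discriminate.
Qed.
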